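(* Let $(X,\mathcal{A},p)$ be a standard Borel probability space and let $e:(X,\mathcal{A},p)\to(X,\mathcal{A},p)$ be a measure-preserving Markov kernel that is $p$-a.s. idempotent (for all $B\in\mathcal{A}$, $\int_X e(B\mid x')\,e(dx'\mid x)=e(B\mid x)$ for $p$-a.a. $x$). Let $\mathcal{I}_e=\{B\in\mathcal{A}: e(B\mid x)=1_B(x)\text{ for }p\text{-a.a. }x\}$. Let $\pi:(X,\mathcal{A},p)\to(X,\mathcal{I}_e,p)$ be the kernel $\pi(B\mid x)=1_B(x)$ and $\pi^+:(X,\mathcal{I}_e,p)\to(X,\mathcal{A},p)$ the kernel $\pi^+(A\mid x)=\mathbb{P}[A\mid\mathcal{I}_e](x)$ (a regular version of the conditional probability). Then $\pi\circ\pi^+=\mathrm{id}_{(X,\mathcal{I}_e,p)}$ and $\pi^+\circ\pi=e$, up to almost sure equality of kernels; i.e. $((X,\mathcal{I}_e,p),\pi^+,\pi)$ splits $e$ in $\mathsf{GKrn}$.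
   Context: A Markov kernel $k$ assigns probability measures $k(\cdot\mid x)$ measurably in $x$; measure-preserving means $\int k(B\mid x)p(dx)=q(B)$; composition $(\ell\circ k)(C\mid x)=\int\ell(C\mid y)k(dy\mid x)$; two kernels are identified if for every measurable $B$ they agree $p$-a.e. $\mathsf{GKrn}$ is the category of probability spaces with these equivalence classes as morphisms. $\mathcal{I}_e$ is a $\sigma$-algebra (the invariant $\sigma$-algebra of $e$). *)

(* Defs.v *)
From HB Require Import structures.
From mathcomp Require Import all_boot all_order all_algebra.
From mathcomp Require Import all_classical all_reals all_analysis.
Set Implicit Arguments. Unset Strict Implicit. Unset Printing Implicit Defensive.
Import Order.TTheory GRing.Theory Num.Theory.
Import numFieldNormedType.Exports.
Local Open Scope classical_set_scope.
Local Open Scope ring_scope.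

(* Standard Borel space: measurably isomorphic to a Borel subset of a Polish
   space (complete, separable, Hausdorff metric space). *)
Definition standard_Borel (R : realType) d (T : measurableType d) : Prop :=
  exists (Y : completePseudoMetricType R),
    hausdorff_space Y /\
    (exists D : set Y, countable D /\ dense D) /\
    exists (f : T -> Y) (S : set Y),
      <<s [set U | open U] >> S /\
      injective f /\ f @` setT = S /\
      (forall A : set T, measurable A -> <<s [set U | open U] >> (f @` A)) /\
      (forall B : set Y, <<s [set U | open U] >> B -> measurable (f @^-1` B)).

Definition kcomp_GKrn (R : realType) d1 d2 d3 (X : measurableType d1)
  (Y : measurableType d2) (Z : measurableType d3)
  (l : Y -> {measure set Z -> \bar R}) (k : X -> {measure set Y -> \bar R})
  : X -> set Z -> \bar R :=
  fun x C => (\int[k x]_y l y C)%E.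

Definition kernel_ae_eq (R : realType) d1 d2 (X : measurableType d1)
  (Z : measurableType d2) (mu : set X -> \bar R) (k l : X -> set Z -> \bar R)
  : Prop :=
  forall B : set Z, measurable B -> {ae mu, forall x, k x B = l x B}.

Definition kernel_preserving (R : realType) d1 d2 (X : measurableType d1)
  (Y : measurableType d2) (mu : {measure set X -> \bar R})
  (nu : set Y -> \bar R) (k : X -> {measure set Y -> \bar R}) : Prop :=
  forall B : set Y, measurable B -> (\int[mu]_x k x B)%E = nu B.

Definition kernel_ae_idempotent (R : realType) d (X : measurableType d)
  (p : {measure set X -> \bar R}) (e : X -> {measure set X -> \bar R}) : Prop :=
  kernel_ae_eq p (kcomp_GKrn e e) (fun x => e x).

Definition invariant_sets (R : realType) d (X : measurableType d)
  (p : {measure set X -> \bar R}) (e : X -> {measure set X -> \bar R})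
  : set (set X) :=
  [set B | measurable B /\ {ae p, forall x, e x B = (\1_B x)%:E}].

Definition Ie_type (R : realType) d (X : measurableType d)
  (p : {measure set X -> \bar R}) (e : X -> {measure set X -> \bar R}) :=
  g_sigma_algebraType (invariant_sets p e).

Definition p_Ie (R : realType) d (X : measurableType d)
  (p : {measure set X -> \bar R}) (e : X -> {measure set X -> \bar R})
  : set (Ie_type p e) -> \bar R := fun A => p A.

Definition pi_ker (R : realType) d (X : measurableType d)
  (p : {measure set X -> \bar R}) (e : X -> {measure set X -> \bar R})
  : X -> {measure set (Ie_type p e) -> \bar R} :=
  fun x => @dirac _ (Ie_type p e) (x : Ie_type p e) R.

Definition id_Ie (R : realType) d (X : measurableType d)
  (p : {measure set X -> \bar R}) (e : X -> {measure set X -> \bar R})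
  : Ie_type p e -> {measure set (Ie_type p e) -> \bar R} :=
  fun x => @dirac _ (Ie_type p e) x R.

(* q is a regular version of the conditional probability P[ . | I_e]:
   for each measurable A, x |-> q(A|x) is I_e-measurable (part of being a
   kernel from (X,I_e)) and \int_I q(A|x) p(dx) = p(A /\ I) for I in I_e. *)
Definition is_reg_cond_prob (R : realType) d (X : measurableType d)
  (p : {measure set X -> \bar R}) (e : X -> {measure set X -> \bar R})
  (q : R.-pker (Ie_type p e) ~> X) : Prop :=
  forall A : set X, measurable A ->
    forall I : set (Ie_type p e), measurable I ->
      (\int[p]_(x in (I : set X)) q (x : Ie_type p e) A)%E = p (A `&` I).

Arguments p_Ie {R d X} p e.
Arguments pi_ker {R d X} p e.
Arguments id_Ie {R d X} p e.
Arguments Ie_type {R d X} p e.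
Arguments is_reg_cond_prob {R d X} p e q.

(* Main.v *)
Set Warnings "-notation-overridden,-ambiguous-paths,-notation-incompatible-prefix".
Require Import Defs.
From HB Require Import structures.
From mathcomp Require Import all_boot all_order all_algebra.
From mathcomp Require Import all_classical all_reals all_analysis.
From mathcomp Require Import measurable_realfun ring.
Import Order.TTheory GRing.Theory Num.Theory.
Local Open Scope classical_set_scope.
Local Open Scope ring_scope.

Section esnd.
Context (R : realType) (d : measure_display) (X : measurableType d)
  (e : R.-pker X ~> X).
Definition esnd : (unit * X)%type -> {measure set X -> \bar R} := fun z => e z.2.
Let mesnd U : measurable U -> measurable_fun [set: (unit * X)%type] (esnd ^~ U).
Proof. by move=> mU; apply: measurableT_comp (measurable_kernel e _ mU) _. Qed.
HB.instance Definition _ := @isKernel.Build _ _ _ _ R esnd mesnd.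
Let esnd_prob z : esnd z [set: X] = 1%E.
Proof. exact: prob_kernel. Qed.
HB.instance Definition _ := @Kernel_isProbability.Build _ _ _ _ R esnd esnd_prob.
End esnd.

Lemma pk_le1 (R : realType) d1 d2 (Y : measurableType d1) (Z : measurableType d2)
  (k : R.-pker Y ~> Z) y (A : set Z) : measurable A -> (k y A <= 1)%E.
Proof.
move=> mA; apply: le_trans (le_measure _ _ _ (@subsetT _ A)) _.
- exact: mem_set.
- exact: mem_set.
- by rewrite le_eqVlt; apply/orP; left; apply/eqP; exact: prob_kernel.
Qed.

Section Aux.
Context (R : realType) (d : measure_display) (X : measurableType d)
  (p : probability X R) (e : R.-pker X ~> X).
Local Open Scope ereal_scope.

Let Inv := invariant_sets p e.

Lemma inv_meas B : Inv B -> measurable B.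
Proof. by case. Qed.

Lemma G_meas B : <<s Inv >> B -> measurable B.
Proof. apply: smallest_sub; [exact: sigma_algebra_measurable|exact: inv_meas]. Qed.

Lemma eprob x : e x setT = 1.
Proof. exact: prob_kernel. Qed.

Lemma eC x A : measurable A -> e x (setT `\` A) = 1 - e x A.
Proof.
move=> mA; rewrite measureD// ?setTI.
  by congr (_ - _); exact: eprob.
have h := eprob x.
apply: (@le_lt_trans _ _ 1); last exact: ltey.
by rewrite le_eqVlt; apply/orP; left; apply/eqP; exact: h.
Qed.

Lemma inv_sigma : sigma_algebra setT Inv.
Proof.
split.
- split => //; apply: aeW => x; by rewrite measure0 indic0.
- move=> A [mA aeA]; split; first exact: measurableD.
  apply: filterS aeA => x h; rewrite eC// h setTD indicC /= indicE.
  by case: (x \in A); rewrite /= -EFinD ?subrr ?subr0.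
- move=> A hA; split; first by apply: bigcup_measurable => n _; exact: (hA n).1.
  have : \forall x \ae p, forall n, e x (A n) = (\1_(A n) x)%:E.
    by apply: ae_foralln => n; exact: (hA n).2.
  apply: filterS => x h.
  have [[n _ Anx]|nA] := pselect ((\bigcup_n A n) x).
    rewrite indicE mem_set; last by exists n.
    apply/eqP; rewrite eq_le; apply/andP; split.
      by rewrite -(eprob x) le_measure// ?inE//; apply: bigcup_measurable => k _; exact: (hA k).1.
    have := h n; rewrite indicE mem_set// => <-.
    rewrite le_measure// ?inE//; [exact: (hA n).1|by apply: bigcup_measurable => k _; exact: (hA k).1|].
    by move=> y Ay; exists n.
  rewrite indicE memNset//; apply/eqP; rewrite eq_le measure_ge0 andbT.
  have := @measure_sigma_subadditive _ _ _ (e x) (\bigcup_n A n) A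
    (fun k => (hA k).1) (bigcup_measurable (fun k _ => (hA k).1)) (@subset_refl _ _).
  rewrite eseries0// => k _ _; rewrite h indicE memNset//.
  by move=> Akx; apply: nA; exists k.
Qed.

Lemma G_inv B : <<s Inv >> B -> Inv B.
Proof. by rewrite smallest_id//; exact: inv_sigma. Qed.


Lemma pres_int (Hpres : kernel_preserving p p e) (f : X -> \bar R) :
  (forall x, 0 <= f x) -> measurable_fun setT f ->
  \int[p]_x (\int[e x]_y f y) = \int[p]_y f y.
Proof.
move=> f0 mf.
have mP : measurable_fun [set: unit] (fun _ : unit => (p : pprobability X R)).
  exact: measurable_cst.
pose l := kprobability mP.
have := @integral_kcomp _ _ _ _ _ _ R l (@esnd R d X e) tt f f0 mf.
rewrite /= => <-.
apply: eq_measure_integral => A mA _.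
rewrite /kcomp /=; exact: Hpres.
Qed.

Lemma eqle (a b : \bar R) : a = b -> a <= b.
Proof. by move=> ->. Qed.

Lemma e_le1 {x C} : measurable C -> e x C <= 1.
Proof.
move=> mC; apply: le_trans (le_measure _ _ _ (@subsetT _ C)) _.
- exact: mem_set.
- exact: mem_set.
- exact/eqle/eprob.
Qed.

Lemma e_fin {x C} : measurable C -> e x C \is a fin_num.
Proof.
move=> mC; rewrite ge0_fin_numE ?measure_ge0//.
apply: le_lt_trans (e_le1 mC) _; exact: ltey.
Qed.

Lemma int_inv (Hpres : kernel_preserving p p e) C I :
  measurable C -> Inv I -> \int[p]_(x in I) e x C = p (C `&` I).
Proof.
move=> mC [mI hI].
rewrite -Hpres; last exact: measurableI.
rewrite [LHS]integral_mkcond.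
apply: (ae_eq_integral (fun x => e x (C `&` I))) => //.
- apply: (measurable_restrictT (fun x => e x C) mI).1.
  exact: (measurable_funS measurableT (@subsetT _ I) (measurable_kernel e C mC)).
- exact: (measurable_kernel e _ (measurableI _ _ mC mI)).
apply: filterS hI => x h _.
rewrite patchE; case: ifPn => xI.
- rewrite (measureDI (e x) mC mI) [X in X + _](_ : _ = 0) ?add0e//.
  apply/eqP; rewrite eq_le measure_ge0 andbT.
  apply: le_trans (le_measure _ _ _ (_ : C `\` I `<=` setT `\` I)) _.
  + by apply: mem_set; exact: measurableD.
  + by apply: mem_set; exact: measurableD.
  + by move=> y [_ ?]; split.
  apply: eqle; apply: (eq_trans (@eC x I mI)).
  by rewrite h indicE xI -EFinD subrr.
- apply/esym/eqP; rewrite eq_le measure_ge0 andbT.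
  apply: le_trans (le_measure _ _ _ (@subIsetr _ C I)) _.
  + by apply: mem_set; exact: measurableI.
  + exact: mem_set.
  by apply: eqle; apply: (eq_trans h); rewrite indicE (negbTE xI).
Qed.

Lemma var0 (Hpres : kernel_preserving p p e) (Hidem : kernel_ae_idempotent p e) C :
  measurable C -> {ae p, forall x, {ae e x, forall y, e y C = e x C}}.
Proof.
move=> mC.
pose r x := fine (e x C).
have eCr x : e x C = (r x)%:E by rewrite /r fineK// e_fin.
have r0 x : (0 <= r x)%R by rewrite /r fine_ge0// measure_ge0.
have r1 x : (r x <= 1)%R by rewrite -lee_fin -eCr e_le1.
have mr : measurable_fun setT r.
  by apply: measurableT_comp => //; exact: measurable_kernel.
pose V x := \int[e x]_y ((r y - r x)^+2)%:E.
pose Q x := \int[e x]_y ((r y)^+2)%:E.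
have mr2 : measurable_fun setT (fun y => ((r y)^+2)%:E).
  by apply/measurable_EFinP; exact: measurable_funX.
have mV : measurable_fun setT V.
  apply: (measurable_fun_integral_sfinite_kernel
    (fun z : X * X => ((r z.2 - r z.1)^+2)%:E) e).
  - by move=> z; rewrite lee_fin sqr_ge0.
  - apply/measurable_EFinP; apply: measurable_funX; apply: measurable_funB.
    + by apply: measurableT_comp => //; exact: measurable_snd.
    + by apply: measurableT_comp => //; exact: measurable_fst.
have mQ : measurable_fun setT Q.
  apply: measurable_fun_integral_kernel => //.
  - exact: measurable_kernel.
  - by move=> y; rewrite lee_fin sqr_ge0.
have V0 x : 0 <= V x by apply: integral_ge0 => y _; rewrite lee_fin sqr_ge0.
have Q0 x : 0 <= Q x by apply: integral_ge0 => y _; rewrite lee_fin sqr_ge0.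
have key : {ae p, forall x, V x + ((r x)^+2 *+ 2)%:E = Q x + ((r x)^+2)%:E}.
  have := Hidem C mC; apply: filterS => x hx.
  rewrite /kcomp_GKrn in hx.
  have Er : \int[e x]_y (r y)%:E = (r x)%:E.
    rewrite -eCr -hx; apply: eq_integral => y _; by rewrite eCr.
  have E1 : \int[e x]_y ((r y)^+2 + (r x)^+2)%:E = Q x + ((r x)^+2)%:E.
    under eq_integral do rewrite EFinD.
    rewrite ge0_integralD//; try (by move=> y _; rewrite lee_fin sqr_ge0);
      try exact: measurable_cst.
    congr (_ + _).
    rewrite (integral_cst _ measurableT).
    rewrite [X in _ * X](_ : _ = 1) ?mule1//; exact: eprob.
  have E2 : \int[e x]_y ((r y - r x)^+2 + (r x *+ 2) * r y)%:E =
      V x + ((r x)^+2 *+ 2)%:E.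
    under eq_integral do rewrite EFinD.
    rewrite ge0_integralD//; try (by move=> y _; rewrite lee_fin sqr_ge0);
      try (by move=> y _; rewrite lee_fin mulr_ge0// mulrn_wge0);
      try (by apply/measurable_EFinP; apply: measurable_funX; apply: measurable_funB => //;
        exact: measurable_cst);
      try (by apply/measurable_EFinP; apply: measurable_funM => //; exact: measurable_cst).
    congr (_ + _).
    under eq_integral do rewrite EFinM.
    rewrite ge0_integralZl//; try (by move=> y _; rewrite lee_fin);
      try (by rewrite lee_fin mulrn_wge0).
    - by rewrite Er -EFinM; congr EFin; ring.
    - exact/measurable_EFinP.
  apply: eq_trans (esym E2) _; apply: eq_trans _ E1.
  apply: eq_integral => y _; congr EFin; ring.
have mr2n : measurable_fun setT (fun x => (r x ^+ 2 *+ 2)%R).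
  rewrite (_ : (fun x => _) = (fun x => (r x ^+ 2 + r x ^+ 2)%R)); last first.
    by apply/funext => x; rewrite mulr2n.
  by apply: measurable_funD; exact: measurable_funX.
have I1 : \int[p]_x (V x + ((r x)^+2 *+ 2)%:E) = \int[p]_x (Q x + ((r x)^+2)%:E).
  apply: ge0_ae_eq_integral => //.
  - apply: emeasurable_funD => //; apply/measurable_EFinP.
    exact: mr2n.
  - exact: emeasurable_funD.
  - by move=> x _; rewrite adde_ge0// lee_fin mulrn_wge0// sqr_ge0.
  - by move=> x _; rewrite adde_ge0// lee_fin sqr_ge0.
  - by apply: filterS key => x h _.
pose a := \int[p]_x ((r x)^+2)%:E.
have a0 : 0 <= a by apply: integral_ge0 => x _; rewrite lee_fin sqr_ge0.
have a1 : a <= 1.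
  have : a <= \int[p]_x (cst 1%:E) x.
    apply: ge0_le_integral => //.
    - by move=> x _; rewrite lee_fin sqr_ge0.
    - by move=> x _; rewrite lee_fin /= expr_le1.
  by rewrite integral_cst//= mul1e probability_setT.
have afin : a \is a fin_num by rewrite ge0_fin_numE// (le_lt_trans a1) ?ltey.
have aafin : a + a \is a fin_num by rewrite fin_numD afin.
have IQ : \int[p]_x Q x = a.
  rewrite /Q /a; apply: (pres_int Hpres _ _ mr2) => y; by rewrite lee_fin sqr_ge0.
have J1 : \int[p]_x (V x + ((r x)^+2 *+ 2)%:E) =
    \int[p]_x V x + \int[p]_x ((r x)^+2 *+ 2)%:E.
  apply: ge0_integralD => //.
  - by move=> x _; rewrite lee_fin mulrn_wge0// sqr_ge0.
  - by apply/measurable_EFinP; exact: mr2n.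
have J2 : \int[p]_x (Q x + ((r x)^+2)%:E) = \int[p]_x Q x + a.
  apply: ge0_integralD => //.
  by move=> x _; rewrite lee_fin sqr_ge0.
rewrite J1 J2 IQ in I1.
have I2 : \int[p]_x ((r x)^+2 *+ 2)%:E = a + a.
  under eq_integral do rewrite mulr2n EFinD.
  by rewrite ge0_integralD// => x _; rewrite lee_fin sqr_ge0.
rewrite I2 in I1.
have IV : \int[p]_x V x = 0.
  by have := congr1 (fun z => z - (a + a)) I1; rewrite /= addeK// subee.
have aeV : ae_eq p setT V (cst 0).
  apply/(ae_eq_integral_abs p measurableT mV).
  by rewrite -IV; apply: eq_integral => x _; rewrite gee0_abs.
apply: filterS aeV => x /(_ I) Vx.
have mf : measurable_fun setT (fun y => ((r y - r x)^+2)%:E).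
  apply/measurable_EFinP; apply: measurable_funX; apply: measurable_funB => //.
have := (ae_eq_integral_abs (e x) measurableT mf).1.
have -> : \int[e x]_y `|((r y - r x)^+2)%:E| = V x.
  by apply: eq_integral => y _; rewrite gee0_abs// lee_fin sqr_ge0.
move=> /(_ Vx); apply: filterS => y /(_ I) /= /eqP.
rewrite eqe sqrf_eq0 subr_eq0 => /eqP ryx.
by rewrite !eCr ryx.
Qed.


Lemma Linv (Hpres : kernel_preserving p p e) (Hidem : kernel_ae_idempotent p e)
  C t : measurable C -> Inv [set x | t%:E < e x C].
Proof.
move=> mC.
have mL : measurable [set x | t%:E < e x C].
  rewrite -[X in measurable X]setTI.
  by apply: measurable_lte => //; exact: measurable_kernel.
split => //.
apply: filterS (@var0 Hpres Hidem C mC) => x [N [mN N0 sN]].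
rewrite indicE; have [tx|tx] := pselect (t%:E < e x C).
- rewrite mem_set//; apply/eqP; rewrite eq_le e_le1//=.
  have h1 : e x (setT `\` N) = 1.
    apply: (eq_trans (@eC x N mN)).
    by rewrite [X in _ - X]N0 sube0.
  rewrite -h1; apply: le_measure.
  + by apply: mem_set; exact: measurableD.
  + exact: mem_set.
  move=> y [_ Ny] /=; have : e y C = e x C.
    by apply: contrapT => hy; apply: Ny; exact: sN.
  by move=> ->.
- rewrite memNset//; apply/eqP; rewrite eq_le measure_ge0 andbT.
  apply: (@le_trans _ _ (e x N)); last exact: eqle.
  apply: le_measure; [exact: mem_set|exact: mem_set|].
  move=> y /= ty; apply: sN => /= hy; apply: tx.
  by rewrite -hy.
Qed.

Lemma meas_eC (Hpres : kernel_preserving p p e) (Hidem : kernel_ae_idempotent p e)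
  C : measurable C -> measurable_fun (T := Ie_type p e) setT (fun x => e x C).
Proof.
move=> mC.
apply: measurability; first exact: (ErealGenOInfty.measurableE R).
move=> _ [_ [t ->] <-].
rewrite setTI.
have -> : (fun x : Ie_type p e => e x C) @^-1` `]t%:E, +oo[%classic =
    [set x | t%:E < e x C].
  by apply/seteqP; split => x /=; rewrite in_itv /= andbT.
apply: sub_sigma_algebra.
exact: Linv.
Qed.

Lemma meas_IeX {f : X -> \bar R} :
  measurable_fun (T := Ie_type p e) setT f -> measurable_fun setT f.
Proof. by move=> mf _ Y mY; apply: G_meas; exact: mf. Qed.

Lemma lt_null (f g : X -> \bar R) :
  measurable_fun (T := Ie_type p e) setT f -> measurable_fun (T := Ie_type p e) setT g ->
  (forall x, 0 <= f x <= 1) -> (forall x, 0 <= g x <= 1) ->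
  (forall I, <<s Inv >> I -> \int[p]_(x in I) f x = \int[p]_(x in I) g x) ->
  <<s Inv >> [set x | f x < g x] /\ p [set x | f x < g x] = 0.
Proof.
move=> mf mg f01 g01 hI.
have mI : <<s Inv >> [set x | f x < g x].
  rewrite -[X in <<s Inv >> X]setTI.
  exact: (@measurable_lte _ (Ie_type p e) _ setT measurableT f g mf mg).
split => //.
set I := [set x | f x < g x].
have mIX : measurable I by exact: G_meas.
have mfX := meas_IeX mf; have mgX := meas_IeX mg.
have ffin x : f x \is a fin_num.
  by case/andP: (f01 x) => h0 h1; rewrite ge0_fin_numE// (le_lt_trans h1) ?ltey.
have gfin x : g x \is a fin_num.
  by case/andP: (g01 x) => h0 h1; rewrite ge0_fin_numE// (le_lt_trans h1) ?ltey.
have intfin : \int[p]_(x in I) f x \is a fin_num.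
  rewrite ge0_fin_numE; last by apply: integral_ge0 => x _; case/andP: (f01 x).
  apply: (@le_lt_trans _ _ (\int[p]_(x in I) (cst 1) x)).
    apply: ge0_le_integral => //.
    - by move=> x _; case/andP: (f01 x).
    - exact: (measurable_funS measurableT (@subsetT _ I) mfX).
    - by move=> x _; case/andP: (f01 x).
  rewrite integral_cst// mul1e.
  apply: le_lt_trans (probability_le1 p mIX) _; exact: ltey.
have mgf : measurable_fun I (fun x => g x - f x).
  exact: (measurable_funS measurableT (@subsetT _ I) (emeasurable_funB mgX mfX)).
have gf0 : forall x, I x -> 0 <= g x - f x.
  by move=> x Ix; rewrite sube_ge0; [exact: ltW|rewrite ffin].
have eq1 : \int[p]_(x in I) g x = \int[p]_(x in I) f x + \int[p]_(x in I) (g x - f x).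
  rewrite -ge0_integralD//; try (by move=> x _; case/andP: (f01 x));
    try exact: (measurable_funS measurableT (@subsetT _ I) mfX).
  apply: eq_integral => x _; rewrite addeC subeK//; exact: ffin.
have int0 : \int[p]_(x in I) (g x - f x) = 0.
  have := congr1 (fun z => z - \int[p]_(x in I) f x) eq1.
  rewrite -(hI I mI) subee// addeC addeK// => <-.
have : \int[p]_(x in I) `|g x - f x| = 0.
  by rewrite -int0; apply: eq_integral => x /set_mem Ix; rewrite gee0_abs// gf0.
move=> /(ae_eq_integral_abs p mIX mgf) [N [mN N0 sN]].
apply/eqP; rewrite eq_le measure_ge0 andbT -N0.
apply: le_measure; [exact: mem_set|exact: mem_set|].
move=> x Ix; apply: sN => /= /(_ Ix) h.
have gf : g x = f x by rewrite -[g x](subeK _ (ffin x)) h add0e.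
by move: Ix; rewrite /I /= gf ltxx.
Qed.

Lemma uniq_null (f g : X -> \bar R) :
  measurable_fun (T := Ie_type p e) setT f -> measurable_fun (T := Ie_type p e) setT g ->
  (forall x, 0 <= f x <= 1) -> (forall x, 0 <= g x <= 1) ->
  (forall I, <<s Inv >> I -> \int[p]_(x in I) f x = \int[p]_(x in I) g x) ->
  exists N, <<s Inv >> N /\ p N = 0 /\ (forall x, ~ N x -> f x = g x).
Proof.
move=> mf mg f01 g01 hI.
have [m1 n1] := lt_null _ _ mf mg f01 g01 hI.
have [m2 n2] := lt_null _ _ mg mf g01 f01 (fun I mI => esym (hI I mI)).
exists ([set x | f x < g x] `|` [set x | g x < f x]); split.
  exact: (@measurableU _ (Ie_type p e) _ _ m1 m2).
split.
  apply/eqP; rewrite eq_le measure_ge0 andbT.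
  apply: le_trans (measureU2 p (G_meas _ m1) (G_meas _ m2)) _.
  apply: eqle; apply: (eq_trans (congr2 (fun a b => (a + b)%E) n1 n2)); by rewrite adde0.
move=> x /not_orP [h1 h2]; apply/eqP; rewrite eq_le !leNgt.
by apply/andP; split; apply/negP.
Qed.

Lemma main_aux (qp : R.-pker (Ie_type p e) ~> X) :
  kernel_preserving p p e -> kernel_ae_idempotent p e ->
  is_reg_cond_prob p e qp ->
  kernel_ae_eq (p_Ie p e) (kcomp_GKrn (pi_ker p e) qp) (fun x => id_Ie p e x)
  /\ kernel_ae_eq p (kcomp_GKrn qp (pi_ker p e)) (fun x => e x).
Proof.
move=> Hpres Hidem Hq; split.
- move=> B mB.
  have mBX : d.-measurable (B : set X) := G_meas _ mB.
  have mg : measurable_fun (T := Ie_type p e) setT (fun x => (\1_B x : R)%:E).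
    apply: measurableT_comp; first exact: EFin_measurable.
    exact: (@measurable_indic _ (Ie_type p e) R setT B mB).
  have f01 : forall x, 0 <= qp x B <= 1.
    by move=> x; rewrite measure_ge0 pk_le1.
  have g01 : forall x : X, 0 <= (\1_B x : R)%:E <= 1.
    move=> x; rewrite indicE; case: (x \in B) => /=; apply/andP; split => //; by rewrite lee_fin ?ler01.
  have hI : forall I, <<s Inv >> I ->
      \int[p]_(x in I) qp x B = \int[p]_(x in I) (\1_B x : R)%:E.
    move=> I mI; rewrite Hq// integral_indic//; exact: G_meas.
  have [N [mN [N0 hN]]] := uniq_null _ _ (measurable_kernel qp B mBX) mg f01 g01 hI.
  exists N; split => //.
  move=> x /= hx; apply: contrapT => Nx; apply: hx.
  rewrite /kcomp_GKrn /id_Ie /pi_ker diracE.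
  transitivity (\int[qp x]_y (\1_B y : R)%:E).
    by apply: eq_integral => y _; exact: diracE.
  by rewrite integral_indic// setIT (hN x Nx) indicE.
- move=> C mC.
  have mg := meas_eC Hpres Hidem C mC.
  have f01 : forall x, 0 <= qp x C <= 1.
    by move=> x; rewrite measure_ge0 pk_le1.
  have g01 : forall x, 0 <= e x C <= 1.
    by move=> x; rewrite measure_ge0 pk_le1.
  have hI : forall I, <<s Inv >> I ->
      \int[p]_(x in I) qp x C = \int[p]_(x in I) e x C.
    by move=> I mI; rewrite (Hq C mC I mI) (int_inv Hpres C I mC (G_inv _ mI)).
  have [N [mN [N0 hN]]] := uniq_null _ _ (measurable_kernel qp C mC) mg f01 g01 hI.
  exists N; split => //; first exact: G_meas.
  move=> x /= hx; apply: contrapT => Nx; apply: hx.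
  rewrite /kcomp_GKrn /pi_ker integral_dirac//; last exact: measurable_kernel.
  by rewrite diracE mem_set// mul1e (hN x Nx).
Qed.

End Aux.

Theorem theorem4p6 (R : realType) (d : measure_display) (X : measurableType d)
  (p : probability X R) (e : R.-pker X ~> X)
  (qp : R.-pker (Ie_type p e) ~> X) :
  standard_Borel R X ->
  kernel_preserving p p e ->
  kernel_ae_idempotent p e ->
  is_reg_cond_prob p e qp ->
  kernel_ae_eq (p_Ie p e) (kcomp_GKrn (pi_ker p e) qp) (fun x => id_Ie p e x)
  /\ kernel_ae_eq p (kcomp_GKrn qp (pi_ker p e)) (fun x => e x).
Proof.
move=> _ Hpres Hidem Hq.
exact: (@main_aux R d X p e qp Hpres Hidem Hq).
Qed.
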